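(* Let $\alpha>1$. Let $N\ge1$, $0\le N_1<N$, and let $p=(p_1,\dots,p_N)$ be a probability vector with $p_1=\dots=p_{N_1}=0$ and $p_k>0$ for $N_1<k\le N$. Let $c_1,\dots,c_N$ be fixed reals, not all zero, with $0\le c_k\le1$ for $k\le N_1$, $|c_k|\le1$ for $k>N_1$, and $\sum_{k=1}^Nc_k=0$. For $0<\varepsilon\le\min_{k>N_1}p_k$ define $p(\varepsilon)$ by $p_k(\varepsilon)=c_k\varepsilon$ for $k\le N_1$ and $p_k(\varepsilon)=p_k+c_k\varepsilon$ for $k>N_1$. Write $S=\sum_{k=N_1+1}^Np_k^\alpha$ and $T=\sum_{k=N_1+1}^Nc_kp_k^{\alpha-1}$. Then, as $\varepsilon\to0+$: (i) if $T\ne0$, then $\mathcal H_\alpha(p)-\mathcal H_\alpha(p(\varepsilon))\sim\frac{\alpha\varepsilon}{\alpha-1}\,T\,S^{-1}$; (ii) if $T=0$, $1<\alpha<2$, $N_1\ge1$ and $c_k\ne0$ for some $k\le N_1$, then $\mathcal H_\alpha(p)-\mathcal H_\alpha(p(\varepsilon))\sim\frac{\varepsilon^\alpha}{\alpha-1}\Big(\sum_{k=1}^{N_1}c_k^\alpha\Big)S^{-1}$; (iii) if $T=0$, $1<\alpha<2$ and $c_k=0$ for all $k\le N_1$, then $\mathcal H_\alpha(p)-\mathcal H_\alpha(p(\varepsilon))\sim\frac{\alpha\varepsilon^2}{2}\Big(\sum_{k=N_1+1}^Nc_k^2p_k^{\alpha-2}\Big)S^{-1}$; (iv) if $T=0$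 and $\alpha=2$, then $\mathcal H_2(p)-\mathcal H_2(p(\varepsilon))\sim\varepsilon^2\Big(\sum_{k=1}^Nc_k^2\Big)\Big(\sum_{k=N_1+1}^Np_k^2\Big)^{-1}$; (v) if $T=0$ and $\alpha>2$, then $\mathcal H_\alpha(p)-\mathcal H_\alpha(p(\varepsilon))\sim\frac{\alpha\varepsilon^2}{2}\Big(\sum_{k=N_1+1}^Nc_k^2p_k^{\alpha-2}\Big)S^{-1}$.
   Context: $\mathcal H_\alpha(p)=\frac1{1-\alpha}\log\sum_kp_k^\alpha$ (Rényi entropy), with $0^\alpha=0$; logarithms are natural. $a(\varepsilon)\sim b(\varepsilon)$ means $a(\varepsilon)/b(\varepsilon)\to1$. *)

(* Defs.v *)
From Stdlib Require Import Reals Lra.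
From Coquelicot Require Import Coquelicot.
Open Scope R_scope.

(* real power with the convention 0^a = 0 (only applied to nonnegative bases) *)
Definition rpow (x a : R) : R := if Rle_dec x 0 then 0 else Rpower x a.

Definition renyi (alpha : R) (N : nat) (p : nat -> R) : R :=
  / (1 - alpha) * ln (sum_n_m (fun k => rpow (p k) alpha) 1 N).

Definition pert (N1 : nat) (p c : nat -> R) (eps : R) : nat -> R :=
  fun k => if (k <=? N1)%nat then c k * eps else p k + c k * eps.

Definition asym_equiv (a b : R -> R) : Prop :=
  filterlim (fun e => a e / b e) (at_right 0) (locally 1).

(* Main.v *)
Require Import Defs.
From Stdlib Require Import Reals.
From Coquelicot Require Import Coquelicot.
From Stdlib Require Import Lia Arith Lra Psatz Classical.
Open Scope R_scope.
From Stdlib Require Import Reals Lra.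
From Coquelicot Require Import Coquelicot.
Open Scope R_scope.

Definition L (f : R -> R) (l : R) := filterlim f (at_right 0) (locally l).

Lemma ball_R (x e y : R) : ball x e y <-> Rabs (y - x) < e.
Proof. reflexivity. Qed.

Lemma ev_intro (P : R -> Prop) :
  (exists d, 0 < d /\ forall e, 0 < e < d -> P e) -> at_right 0 P.
Proof.
  intros [d [Hd H]]. exists (mkposreal d Hd). intros y Hy Hy0.
  apply H. change (Rabs (y - 0) < d) in Hy. rewrite Rminus_0_r in Hy.
  apply Rabs_def2 in Hy. lra.
Qed.

Lemma ev_elim (P : R -> Prop) :
  at_right 0 P -> exists d, 0 < d /\ forall e, 0 < e < d -> P e.
Proof.
  intros [d H]. exists d. split. apply cond_pos. intros e He. apply H.
  apply ball_R. rewrite Rminus_0_r. rewrite Rabs_right; lra. lra.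
Qed.

Lemma L_intro f l :
  (forall eta, 0 < eta -> exists d, 0 < d /\ forall e, 0 < e < d -> Rabs (f e - l) < eta) -> L f l.
Proof.
  intros H. apply filterlim_locally. intros eta. apply ev_intro.
  destruct (H eta (cond_pos eta)) as [d [Hd Hd']]. exists d; split; [exact Hd|].
  intros e He. apply ball_R. auto.
Qed.

Lemma L_elim f l : L f l ->
  forall eta, 0 < eta -> exists d, 0 < d /\ forall e, 0 < e < d -> Rabs (f e - l) < eta.
Proof.
  intros H eta Heta. apply filterlim_locally with (eps := mkposreal eta Heta) in H.
  apply ev_elim in H. exact H.
Qed.

Lemma L_ext f g l : (forall e, 0 < e -> f e = g e) -> L f l -> L g l.
Proof.
  intros H1 H2. apply (filterlim_ext_loc f g). apply ev_intro. exists 1; split; [lra|].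
  intros e He; apply H1; lra. exact H2.
Qed.

Lemma L_ext_loc f g l : (exists d, 0 < d /\ forall e, 0 < e < d -> f e = g e) -> L f l -> L g l.
Proof.
  intros H1 H2. apply (filterlim_ext_loc f g). apply ev_intro. exact H1. exact H2.
Qed.

Lemma L_const a : L (fun _ => a) a.
Proof. apply filterlim_const. Qed.

Lemma L_id : L (fun e => e) 0.
Proof.
  apply L_intro. intros eta Heta. exists eta; split; auto. intros e He.
  rewrite Rminus_0_r, Rabs_right; lra.
Qed.

Lemma L_plus f g a b : L f a -> L g b -> L (fun e => f e + g e) (a + b).
Proof.
  intros Hf Hg. apply (filterlim_comp_2 f g Rplus Hf Hg).
  apply (filterlim_plus a b).
Qed.

Lemma L_mult f g a b : L f a -> L g b -> L (fun e => f e * g e) (a * b).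
Proof.
  intros Hf Hg. apply (filterlim_comp_2 f g Rmult Hf Hg).
  apply (filterlim_mult a b).
Qed.

Lemma L_opp f a : L f a -> L (fun e => - f e) (- a).
Proof.
  intros H. replace (- a) with (-1 * a) by ring.
  apply (L_ext (fun e => -1 * f e)). intros; ring.
  apply L_mult; auto. apply L_const.
Qed.

Lemma L_minus f g a b : L f a -> L g b -> L (fun e => f e - g e) (a - b).
Proof. intros; apply L_plus; auto. apply L_opp; auto. Qed.

Lemma L_inv f a : a <> 0 -> L f a -> L (fun e => / f e) (/ a).
Proof.
  intros Ha H. unfold L. eapply filterlim_comp. exact H.
  apply (filterlim_Rbar_inv (Finite a)). intro E; apply Ha; injection E; auto.
Qed.

Lemma rpow_pos x a : 0 < x -> rpow x a = Rpower x a.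
Proof. intros H; unfold rpow; destruct (Rle_dec x 0); [lra|auto]. Qed.

Lemma rpow_nonpos x a : x <= 0 -> rpow x a = 0.
Proof. intros H; unfold rpow; destruct (Rle_dec x 0); [auto|lra]. Qed.

Lemma Rpower_pos x a : 0 < Rpower x a.
Proof. unfold Rpower; apply exp_pos. Qed.

Lemma L_rpow0 b : 0 < b -> L (fun e => rpow e b) 0.
Proof.
  intros Hb. apply L_intro. intros eta Heta. exists (Rpower eta (/ b)). split.
  apply Rpower_pos. intros e He. rewrite rpow_pos by lra. rewrite Rminus_0_r.
  rewrite Rabs_right by (left; apply Rpower_pos).
  replace eta with (Rpower (Rpower eta (/ b)) b).
  apply Rlt_Rpower_l; lra.
  rewrite Rpower_mult. rewrite Rinv_l by lra. apply Rpower_1; auto.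
Qed.

Lemma L_sum (f : nat -> R -> R) (l : nat -> R) n m :
  (forall k, (n <= k <= m)%nat -> L (f k) (l k)) ->
  L (fun e => sum_n_m (fun k => f k e) n m) (sum_n_m l n m).
Proof.
  induction m; intros H.
  - destruct n.
    + rewrite sum_n_n. apply (L_ext (f 0%nat)). intros; rewrite sum_n_n; auto.
      apply H; lia.
    + rewrite sum_n_m_zero by lia. apply (L_ext (fun _ => 0)).
      intros; rewrite sum_n_m_zero by lia; reflexivity. apply L_const.
  - destruct (Compare_dec.le_lt_dec n (S m)) as [Hn|Hn].
    + rewrite sum_n_Sm by lia. apply (L_ext (fun e => sum_n_m (fun k => f k e) n m + f (S m) e)).
      intros; rewrite sum_n_Sm by lia; reflexivity.
      apply L_plus. apply IHm. intros; apply H; lia. apply H; lia.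
    + rewrite sum_n_m_zero by lia. apply (L_ext (fun _ => 0)).
      intros; rewrite sum_n_m_zero by lia; reflexivity. apply L_const.
Qed.

Lemma MVT2 (r r1 r2 : R -> R) M d : 0 < d <= 1/2 ->
  (forall x, 0 < x -> derivable_pt_lim r x (r1 x)) ->
  (forall x, 0 < x -> derivable_pt_lim r1 x (r2 x)) ->
  r 1 = 0 -> r1 1 = 0 ->
  (forall x, Rabs (x - 1) < d -> Rabs (r2 x) <= M) ->
  forall t, Rabs t < d -> Rabs (r (1 + t)) <= M * t ^ 2.
Proof.
  intros Hd D1 D2 R0 R10 HM t Ht.
  assert (HM0 : 0 <= M). { eapply Rle_trans; [apply Rabs_pos|]. apply (HM 1). rewrite Rminus_eq_0, Rabs_R0; lra. }
  apply Rabs_def2 in Ht.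
  destruct (Rtotal_order t 0) as [Hlt|[Heq|Hgt]].
  - destruct (MVT_cor2 r r1 (1 + t) 1) as [s [Hs1 Hs2]]. lra.
    intros x Hx; apply D1; lra.
    destruct (MVT_cor2 r1 r2 s 1) as [u [Hu1 Hu2]]. lra.
    intros x Hx; apply D2; lra.
    assert (E : r (1 + t) = - r2 u * (1 - s) * t).
    { rewrite R0 in Hs1. rewrite R10 in Hu1. assert (H1 : r1 s = - (r2 u * (1 - s))) by lra. rewrite H1 in Hs1. lra. }
    rewrite E. rewrite !Rabs_mult, Rabs_Ropp.
    assert (Hb : Rabs (r2 u) <= M). { apply HM. apply Rabs_def1; lra. }
    rewrite (Rabs_right (1 - s)) by lra. rewrite (Rabs_left t) by lra.
    assert (0 <= Rabs (r2 u)) by apply Rabs_pos.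
    assert (0 <= (M - Rabs (r2 u)) * ((1 - s) * - t)) by (apply Rmult_le_pos; nra).
    assert (0 <= M * (-t * (-t - (1 - s)))) by (apply Rmult_le_pos; nra). nra.
  - subst. rewrite Rplus_0_r, R0, Rabs_R0. nra.
  - destruct (MVT_cor2 r r1 1 (1 + t)) as [s [Hs1 Hs2]]. lra.
    intros x Hx; apply D1; lra.
    destruct (MVT_cor2 r1 r2 1 s) as [u [Hu1 Hu2]]. lra.
    intros x Hx; apply D2; lra.
    assert (E : r (1 + t) = r2 u * (s - 1) * t).
    { rewrite R0 in Hs1. rewrite R10 in Hu1. assert (H1 : r1 s = r2 u * (s - 1)) by lra. rewrite H1 in Hs1. lra. }
    rewrite E. rewrite !Rabs_mult.
    assert (Hb : Rabs (r2 u) <= M). { apply HM. apply Rabs_def1; lra. }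
    rewrite (Rabs_right (s - 1)) by lra. rewrite (Rabs_right t) by lra.
    assert (0 <= Rabs (r2 u)) by apply Rabs_pos.
    assert (0 <= (M - Rabs (r2 u)) * ((s - 1) * t)) by (apply Rmult_le_pos; nra).
    assert (0 <= M * (t * (t - (s - 1)))) by (apply Rmult_le_pos; nra). nra.
Qed.

Lemma is_derive_pow_r x a : 0 < x -> is_derive (fun y => Rpower y a) x (a * Rpower x (a - 1)).
Proof. intros Hx. apply is_derive_Reals. apply derivable_pt_lim_power; auto. Qed.

Lemma Derive_pow_r x a : 0 < x -> Derive (fun y => Rpower y a) x = a * Rpower x (a - 1).
Proof. intros Hx. apply is_derive_unique. apply is_derive_pow_r; auto. Qed.

Lemma ex_derive_pow_r x a : 0 < x -> ex_derive (fun y => Rpower y a) x.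
Proof. intros Hx. eexists. apply is_derive_pow_r; auto. Qed.

Lemma Rpower_one y : Rpower 1 y = 1.
Proof. unfold Rpower. rewrite ln_1, Rmult_0_r. apply exp_0. Qed.

Lemma Rpower_cont1 b eta : 0 < eta -> exists d, 0 < d /\
  forall x, Rabs (x - 1) < d -> Rabs (Rpower x b - 1) <= eta.
Proof.
  intros Heta.
  destruct (derivable_pt_lim_power 1 b Rlt_0_1 1 Rlt_0_1) as [d Hd].
  set (K := Rabs (b * Rpower 1 (b - 1)) + 1).
  assert (HK : 0 < K) by (unfold K; pose proof (Rabs_pos (b * Rpower 1 (b - 1))); lra).
  exists (Rmin d (eta / K)). split.
  apply Rmin_pos. apply cond_pos. apply Rdiv_lt_0_compat; lra.
  intros x Hx.
  destruct (Req_dec x 1) as [E|E].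
  { subst. rewrite Rpower_one. rewrite Rminus_eq_0, Rabs_R0. lra. }
  assert (Hx1 : Rabs (x - 1) < d) by (eapply Rlt_le_trans; [apply Hx| apply Rmin_l]).
  assert (Hx2 : Rabs (x - 1) < eta / K) by (eapply Rlt_le_trans; [apply Hx| apply Rmin_r]).
  assert (Hh : x - 1 <> 0) by lra.
  specialize (Hd (x - 1) Hh Hx1). replace (1 + (x - 1)) with x in Hd by ring.
  rewrite Rpower_one in Hd.
  set (q := (Rpower x b - 1) / (x - 1)) in Hd.
  assert (Eq : Rpower x b - 1 = q * (x - 1)) by (unfold q; field; auto).
  rewrite Eq, Rabs_mult.
  assert (Hq : Rabs q <= K).
  { unfold K. pose proof (Rabs_triang_inv q (b * Rpower 1 (b - 1))). lra. }
  assert (Hpos : 0 < Rabs (x - 1)) by (apply Rabs_pos_lt; auto).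
  assert (Hx3 : Rabs (x - 1) * K < eta).
  { apply (Rmult_lt_compat_r K) in Hx2; auto. unfold Rdiv in Hx2.
    rewrite Rmult_assoc, Rinv_l, Rmult_1_r in Hx2 by lra. lra. }
  pose proof (Rabs_pos q). nra.
Qed.

Lemma Taylor2 a eta : 0 < eta -> exists d, 0 < d /\ forall t, Rabs t < d ->
  Rabs (Rpower (1 + t) a - 1 - a * t - a * (a - 1) / 2 * t ^ 2) <= eta * t ^ 2.
Proof.
  intros Heta.
  set (K := Rabs (a * (a - 1)) + 1).
  assert (HK : 0 < K) by (unfold K; pose proof (Rabs_pos (a * (a - 1))); lra).
  destruct (Rpower_cont1 (a - 2) (eta / K)) as [d0 [Hd0 Hc]].
  apply Rdiv_lt_0_compat; lra.
  exists (Rmin d0 (1/2)). split. apply Rmin_pos; lra.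
  intros t Ht.
  set (g0 := fun y => Rpower y a - 1 - a * (y - 1) - a * (a - 1) / 2 * (y - 1) ^ 2).
  set (g1 := fun y => a * Rpower y (a - 1) - a - a * (a - 1) * (y - 1)).
  set (g2 := fun y => a * ((a - 1) * Rpower y (a - 2)) - a * (a - 1)).
  assert (E : Rpower (1 + t) a - 1 - a * t - a * (a - 1) / 2 * t ^ 2 = g0 (1 + t)).
  { unfold g0. replace (1 + t - 1) with t by ring. reflexivity. }
  rewrite E.
  apply (MVT2 g0 g1 g2 (eta) (Rmin d0 (1/2))).
  - split. apply Rmin_pos; lra. apply Rmin_r.
  - intros x Hx. apply is_derive_Reals. unfold g0, g1. auto_derive.
    apply ex_derive_pow_r; auto. rewrite Derive_pow_r by auto. field.
  - intros x Hx. apply is_derive_Reals. unfold g1, g2. auto_derive.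
    apply ex_derive_pow_r; auto. rewrite Derive_pow_r by auto.
    replace (a - 1 - 1) with (a - 2) by ring. ring.
  - unfold g0. rewrite Rpower_one. ring.
  - unfold g1. rewrite Rpower_one. ring.
  - intros x Hx. unfold g2.
    assert (Hx' : Rabs (x - 1) < d0) by (eapply Rlt_le_trans; [apply Hx| apply Rmin_l]).
    specialize (Hc x Hx').
    replace (a * ((a - 1) * Rpower x (a - 2)) - a * (a - 1)) with (a * (a - 1) * (Rpower x (a - 2) - 1)) by ring.
    rewrite Rabs_mult.
    assert (Hb : Rabs (a * (a - 1)) <= K) by (unfold K; lra).
    assert (Hc' : K * Rabs (Rpower x (a - 2) - 1) <= eta).
    { apply (Rmult_le_compat_l K) in Hc; [|lra]. unfold Rdiv in Hc.
      rewrite <- Rmult_assoc, (Rmult_comm K eta), Rmult_assoc, Rinv_r, Rmult_1_r in Hc by lra. lra. }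
    pose proof (Rabs_pos (Rpower x (a - 2) - 1)). pose proof (Rabs_pos (a * (a - 1))). nra.
  - exact Ht.
Qed.

Lemma Rpower_m1 p a : 0 < p -> Rpower p (a - 1) = Rpower p a / p.
Proof.
  intros Hp. replace (a - 1) with (a + - (1)) by ring. rewrite Rpower_plus, Rpower_Ropp, Rpower_1; auto.
Qed.

Lemma Rpower_m2 p a : 0 < p -> Rpower p (a - 2) = Rpower p a / p ^ 2.
Proof.
  intros Hp. replace (a - 2) with ((a - 1) - 1) by ring. rewrite !Rpower_m1 by auto. field. lra.
Qed.

Definition hterm (a p c e : R) :=
  (rpow (p + c * e) a - rpow p a) / e ^ 2 - (a * (c * rpow p (a - 1))) / e
  - (a * (a - 1) / 2) * (c ^ 2 * rpow p (a - 2)).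

Lemma PC a p c : 0 < p -> L (hterm a p c) 0.
Proof.
  intros Hp. apply L_intro. intros eta Heta.
  set (P := Rpower p a). assert (HP : 0 < P) by apply Rpower_pos.
  set (eta' := eta * p ^ 2 / (P * (c ^ 2 + 1))).
  assert (Heta' : 0 < eta').
  { unfold eta'. apply Rdiv_lt_0_compat. apply Rmult_lt_0_compat; auto. apply pow_lt; auto.
    apply Rmult_lt_0_compat; auto. pose proof (pow2_ge_0 c); lra. }
  destruct (Taylor2 a eta' Heta') as [d [Hd HT]].
  pose proof (Rabs_pos c) as Hc0.
  exists (Rmin d (1/2) * p / (Rabs c + 1)). split.
  { apply Rdiv_lt_0_compat. apply Rmult_lt_0_compat; auto. apply Rmin_pos; lra. lra. }
  intros e He.
  set (t := c * e / p).
  assert (Hm : 0 < Rmin d (1/2)) by (apply Rmin_pos; lra).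
  assert (Ht : Rabs t < Rmin d (1/2)).
  { unfold t. unfold Rdiv. rewrite !Rabs_mult, (Rabs_right e) by lra.
    rewrite Rabs_Rinv by lra. rewrite (Rabs_right p) by lra.
    destruct He as [He1 He2].
    assert (e * (Rabs c + 1) < Rmin d (1/2) * p).
    { apply (Rmult_lt_compat_r (Rabs c + 1)) in He2; [|lra].
      unfold Rdiv in He2. rewrite Rmult_assoc, Rinv_l, Rmult_1_r in He2 by lra. lra. }
    apply (Rmult_lt_reg_r p); auto. rewrite Rmult_assoc, Rinv_l by lra. nra. }
  assert (Ht1 : Rabs t < d) by (eapply Rlt_le_trans; [apply Ht|apply Rmin_l]).
  assert (Ht2 : Rabs t < 1/2) by (eapply Rlt_le_trans; [apply Ht|apply Rmin_r]).
  specialize (HT t Ht1).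
  apply Rabs_def2 in Ht2.
  assert (Hpe : p + c * e = p * (1 + t)) by (unfold t; field; lra).
  assert (Hpos : 0 < p * (1 + t)) by (apply Rmult_lt_0_compat; lra).
  assert (Eh : hterm a p c e = P * (Rpower (1 + t) a - 1 - a * t - a * (a - 1) / 2 * t ^ 2) / e ^ 2).
  { unfold hterm. rewrite Hpe. rewrite !rpow_pos by lra.
    rewrite <- Rpower_mult_distr by lra. rewrite Rpower_m1, Rpower_m2 by lra. fold P.
    unfold t. field. lra. }
  rewrite Rminus_0_r, Eh.
  unfold Rdiv. rewrite !Rabs_mult. rewrite (Rabs_right P) by lra.
  rewrite Rabs_Rinv by (apply pow_nonzero; lra). rewrite (Rabs_right (e ^ 2)) by (left; apply pow_lt; lra).
  assert (Hb : P * Rabs (Rpower (1 + t) a - 1 - a * t - a * (a - 1) / 2 * t ^ 2) <= P * (eta' * t ^ 2)).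
  { apply Rmult_le_compat_l; lra. }
  assert (Eq2 : P * (eta' * t ^ 2) * / e ^ 2 = eta * (c ^ 2 / (c ^ 2 + 1))).
  { unfold eta', t. field. pose proof (pow2_ge_0 c). repeat split; lra. }
  assert (Hf : c ^ 2 / (c ^ 2 + 1) < 1).
  { pose proof (pow2_ge_0 c). apply (Rmult_lt_reg_r (c ^ 2 + 1)). lra.
    unfold Rdiv. rewrite Rmult_assoc, Rinv_l by lra. lra. }
  assert (Hinv : 0 < / e ^ 2) by (apply Rinv_0_lt_compat; apply pow_lt; lra).
  apply (Rmult_le_compat_r (/ e ^ 2)) in Hb; [|lra].
  rewrite Eq2 in Hb. nra.
Qed.

Lemma Lln u : L u 0 -> (exists d0, 0 < d0 /\ forall e, 0 < e < d0 -> u e <> 0) ->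
  L (fun e => ln (1 + u e) / u e) 1.
Proof.
  intros Hu [d0 [Hd0 Hn]]. apply L_intro. intros eta Heta.
  destruct (derivable_pt_lim_ln 1 Rlt_0_1 eta Heta) as [dl Hdl].
  destruct (L_elim u 0 Hu dl (cond_pos dl)) as [d [Hd Hd']].
  exists (Rmin d d0). split. apply Rmin_pos; auto.
  intros e He.
  assert (He1 : 0 < e < d) by (split; [lra| eapply Rlt_le_trans; [apply He| apply Rmin_l]]).
  assert (He2 : 0 < e < d0) by (split; [lra| eapply Rlt_le_trans; [apply He| apply Rmin_r]]).
  specialize (Hd' e He1). rewrite Rminus_0_r in Hd'.
  specialize (Hdl (u e) (Hn e He2) Hd'). rewrite ln_1, Rminus_0_r, Rinv_1 in Hdl. exact Hdl.
Qed.

Lemma Fin a S0 K (F m b : R -> R) : 1 < a -> 0 < S0 -> K <> 0 ->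
  L (fun e => (F e - S0) / m e) K -> L m 0 -> (forall e, 0 < e -> m e <> 0) ->
  (forall e, 0 < e -> b e = m e * K / ((a - 1) * S0)) ->
  L (fun e => (/ (1 - a) * ln S0 - / (1 - a) * ln (F e)) / b e) 1.
Proof.
  intros Ha HS HK HL Hm Hm0 Hb.
  set (u := fun e => (F e - S0) / S0).
  assert (Hu : L u 0).
  { apply (L_ext (fun e => (F e - S0) / m e * m e * / S0)).
    intros e He. unfold u. field. split; [lra| apply Hm0; auto].
    replace 0 with (K * 0 * / S0) by ring. apply L_mult. apply L_mult; auto. apply L_const. }
  assert (HKa : 0 < Rabs K) by (apply Rabs_pos_lt; auto).
  destruct (L_elim _ _ HL (Rabs K / 2)) as [d1 [Hd1 H1]]. lra.
  destruct (L_elim _ _ Hu (1/2)) as [d2 [Hd2 H2]]. lra.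
  assert (Hne : forall e, 0 < e < Rmin d1 d2 -> u e <> 0).
  { intros e He. assert (He1 : 0 < e < d1) by (split; [lra| eapply Rlt_le_trans; [apply He| apply Rmin_l]]).
    specialize (H1 e He1). intro E. unfold u in E.
    assert (E' : F e - S0 = 0).
    { unfold Rdiv in E. apply Rmult_integral in E. destruct E as [E|E]; auto.
      exfalso. apply (Rinv_neq_0_compat S0); lra. }
    rewrite E' in H1. unfold Rdiv in H1. rewrite Rmult_0_l, Rminus_0_l, Rabs_Ropp in H1. lra. }
  assert (Hln := Lln u Hu (ex_intro _ (Rmin d1 d2) (conj (Rmin_pos _ _ Hd1 Hd2) Hne))).
  assert (HH : L (fun e => ln (1 + u e) / u e * ((F e - S0) / m e * / K)) (1 * (K * / K)))
    by (apply L_mult; auto; apply L_mult; auto; apply L_const).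
  replace (1 * (K * / K)) with 1 in HH by (field; auto).
  refine (L_ext_loc _ _ _ _ HH).
  { exists (Rmin d1 d2). split. apply Rmin_pos; auto. intros e He.
    assert (He2 : 0 < e < d2) by (split; [lra| eapply Rlt_le_trans; [apply He| apply Rmin_r]]).
    specialize (H2 e He2). rewrite Rminus_0_r in H2. apply Rabs_def2 in H2.
    assert (Hue := Hne e He). assert (Hme := Hm0 e (proj1 He)).
    rewrite (Hb e (proj1 He)).
    assert (EF : F e = S0 * (1 + u e)) by (unfold u; field; lra).
    rewrite EF. rewrite ln_mult by lra.
    replace (S0 * (1 + u e) - S0) with (S0 * u e) by ring.
    field. repeat split; lra. }
Qed.

Lemma sum_split (f : nat -> R) N1 N : (N1 <= N)%nat ->
  sum_n_m f 1 N = sum_n_m f 1 N1 + sum_n_m f (N1 + 1) N.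
Proof.
  intros H. replace (N1 + 1)%nat with (S N1) by lia.
  apply (sum_n_m_Chasles f 1 N1 N); lia.
Qed.

Lemma sum_zero (f : nat -> R) n m : (forall k, (n <= k <= m)%nat -> f k = 0) -> sum_n_m f n m = 0.
Proof.
  intros H. rewrite (sum_n_m_ext_loc f (fun _ => zero)). exact (@sum_n_m_const_zero R_AbelianMonoid n m).
  intros; apply H; auto.
Qed.

Lemma sum_ext (f g : nat -> R) n m : (forall k, (n <= k <= m)%nat -> f k = g k) -> sum_n_m f n m = sum_n_m g n m.
Proof. apply sum_n_m_ext_loc. Qed.

Lemma sum_plus (f g : nat -> R) n m : sum_n_m (fun k => f k + g k) n m = sum_n_m f n m + sum_n_m g n m.
Proof. exact (sum_n_m_plus f g n m). Qed.

Lemma sum_scal x (f : nat -> R) n m : sum_n_m (fun k => x * f k) n m = x * sum_n_m f n m.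
Proof. exact (sum_n_m_mult_l x f n m). Qed.

Lemma sum_nonneg (f : nat -> R) n m : (forall k, (n <= k <= m)%nat -> 0 <= f k) -> 0 <= sum_n_m f n m.
Proof.
  induction m; intros H.
  - destruct n. rewrite sum_n_n. apply H; lia. rewrite sum_n_m_zero by lia. apply Rle_refl.
  - destruct (Compare_dec.le_lt_dec n (S m)) as [Hn|Hn].
    + rewrite sum_n_Sm by lia. change (0 <= sum_n_m f n m + f (S m)).
      assert (0 <= sum_n_m f n m) by (apply IHm; intros; apply H; lia).
      assert (0 <= f (S m)) by (apply H; lia). lra.
    + rewrite sum_n_m_zero by lia. apply Rle_refl.
Qed.

Lemma sum_pos (f : nat -> R) n m : (forall k, (n <= k <= m)%nat -> 0 <= f k) ->
  (exists k, (n <= k <= m)%nat /\ 0 < f k) -> 0 < sum_n_m f n m.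
Proof.
  intros H [k [Hk Hfk]].
  rewrite (sum_n_m_Chasles f n k m) by lia. change (0 < sum_n_m f n k + sum_n_m f (S k) m).
  assert (0 <= sum_n_m f (S k) m) by (apply sum_nonneg; intros; apply H; lia).
  assert (0 < sum_n_m f n k).
  { destruct (Nat.eq_dec n k) as [E|E].
    - subst. rewrite sum_n_n. auto.
    - destruct k as [|k]. lia. rewrite sum_n_Sm by lia. change (0 < sum_n_m f n k + f (S k)).
      assert (0 <= sum_n_m f n k) by (apply sum_nonneg; intros; apply H; lia). lra. }
  lra.
Qed.

Lemma rpow_mul_c x e a : 0 <= x -> 0 < e -> rpow (x * e) a = rpow e a * rpow x a.
Proof.
  intros Hx He. destruct (Req_dec x 0) as [E|E].
  - subst. rewrite Rmult_0_l, !rpow_nonpos by lra. ring.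
  - rewrite !rpow_pos by nra. rewrite Rpower_mult_distr by lra. f_equal; ring.
Qed.

Lemma decomp a N N1 (p c : nat -> R) : (N1 < N)%nat ->
  (forall k, (1 <= k <= N1)%nat -> p k = 0) ->
  (forall k, (N1 < k <= N)%nat -> 0 < p k) ->
  (forall k, (1 <= k <= N1)%nat -> 0 <= c k) ->
  sum_n_m (fun k => rpow (p k) a) 1 N = sum_n_m (fun k => rpow (p k) a) (N1 + 1) N /\
  forall e, 0 < e ->
    sum_n_m (fun k => rpow (pert N1 p c e k) a) 1 N - sum_n_m (fun k => rpow (p k) a) (N1 + 1) N =
    sum_n_m (fun k => rpow (c k) a) 1 N1 * rpow e a
    + a * sum_n_m (fun k => c k * rpow (p k) (a - 1)) (N1 + 1) N * e
    + a * (a - 1) / 2 * sum_n_m (fun k => c k ^ 2 * rpow (p k) (a - 2)) (N1 + 1) N * e ^ 2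
    + e ^ 2 * sum_n_m (fun k => hterm a (p k) (c k) e) (N1 + 1) N.
Proof.
  intros HN Hp0 Hp Hc. split.
  - rewrite (sum_split _ N1 N) by lia. rewrite sum_zero. apply Rplus_0_l.
    intros k Hk. rewrite Hp0 by lia. apply rpow_nonpos; lra.
  - intros e He. rewrite (sum_split _ N1 N) by lia.
    rewrite (sum_ext (fun k => rpow (pert N1 p c e k) a) (fun k => rpow e a * rpow (c k) a) 1 N1).
    2:{ intros k Hk. unfold pert. replace (k <=? N1)%nat with true by (symmetry; apply Nat.leb_le; lia).
        apply rpow_mul_c; [apply Hc; lia | exact He]. }
    rewrite sum_scal.
    rewrite (sum_ext (fun k => rpow (pert N1 p c e k) a)
      (fun k => rpow (p k) a + ((e * a) * (c k * rpow (p k) (a - 1)) +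
         ((e ^ 2 * (a * (a - 1) / 2)) * (c k ^ 2 * rpow (p k) (a - 2)) + e ^ 2 * hterm a (p k) (c k) e))) (N1 + 1) N).
    2:{ intros k Hk. unfold pert. replace (k <=? N1)%nat with false by (symmetry; apply Nat.leb_gt; lia).
        unfold hterm. field. lra. }
    rewrite !sum_plus, !sum_scal. ring.
Qed.

Lemma rpow_nonneg x a : 0 <= rpow x a.
Proof. unfold rpow. destruct (Rle_dec x 0). lra. left; apply Rpower_pos. Qed.

Lemma Rpower_two e : 0 < e -> Rpower e 2 = e ^ 2.
Proof. intros He. replace 2 with (INR 2) by (simpl; ring). apply Rpower_pow; auto. Qed.

Lemma Rpower_2m e a : 0 < e -> Rpower e (2 - a) = e ^ 2 / Rpower e a.
Proof.
  intros He. replace (2 - a) with (2 + - a) by ring. rewrite Rpower_plus, Rpower_Ropp, Rpower_two by auto.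
  reflexivity.
Qed.

Lemma Fin' a S0 K (F m b : R -> R) : 1 < a -> 0 < S0 -> K <> 0 ->
  (forall e, 0 < e -> m e <> 0) -> L m 0 ->
  (forall e, 0 < e -> b e = m e * K / ((a - 1) * S0)) ->
  forall g, L g K -> (forall e, 0 < e -> g e = (F e - S0) / m e) ->
  L (fun e => (/ (1 - a) * ln S0 - / (1 - a) * ln (F e)) / b e) 1.
Proof.
  intros Ha HS HK Hm0 Hm Hb g Hg Heq. apply (Fin a S0 K F m b); auto.
  apply (L_ext g); auto.
Qed.

Theorem mainTheorem9 (alpha : R) (N N1 : nat) (p c : nat -> R) :
  1 < alpha ->
  (1 <= N)%nat -> (N1 < N)%nat ->
  (forall k, (1 <= k <= N)%nat -> 0 <= p k) ->
  sum_n_m p 1 N = 1 ->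
  (forall k, (1 <= k <= N1)%nat -> p k = 0) ->
  (forall k, (N1 < k <= N)%nat -> 0 < p k) ->
  (exists k, (1 <= k <= N)%nat /\ c k <> 0) ->
  (forall k, (1 <= k <= N1)%nat -> 0 <= c k <= 1) ->
  (forall k, (N1 < k <= N)%nat -> Rabs (c k) <= 1) ->
  sum_n_m c 1 N = 0 ->
  let Ssum := sum_n_m (fun k => rpow (p k) alpha) (N1 + 1)%nat N in
  let Tsum := sum_n_m (fun k => c k * rpow (p k) (alpha - 1)) (N1 + 1)%nat N in
  let D := fun eps => renyi alpha N p - renyi alpha N (pert N1 p c eps) in
  (* (i) *)
  (Tsum <> 0 ->
     asym_equiv D (fun eps => alpha * eps / (alpha - 1) * Tsum / Ssum)) /\
  (* (ii) *)
  (Tsum = 0 -> alpha < 2 -> (1 <= N1)%nat ->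
     (exists k, (1 <= k <= N1)%nat /\ c k <> 0) ->
     asym_equiv D (fun eps => rpow eps alpha / (alpha - 1)
                      * sum_n_m (fun k => rpow (c k) alpha) 1 N1 / Ssum)) /\
  (* (iii) *)
  (Tsum = 0 -> alpha < 2 ->
     (forall k, (1 <= k <= N1)%nat -> c k = 0) ->
     asym_equiv D (fun eps => alpha * eps ^ 2 / 2
         * sum_n_m (fun k => c k ^ 2 * rpow (p k) (alpha - 2)) (N1 + 1)%nat N / Ssum)) /\
  (* (iv) *)
  (Tsum = 0 -> alpha = 2 ->
     asym_equiv D (fun eps => eps ^ 2 * sum_n_m (fun k => c k ^ 2) 1 N
                      / sum_n_m (fun k => p k ^ 2) (N1 + 1)%nat N)) /\
  (* (v) *)
  (Tsum = 0 -> 2 < alpha ->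
     asym_equiv D (fun eps => alpha * eps ^ 2 / 2
         * sum_n_m (fun k => c k ^ 2 * rpow (p k) (alpha - 2)) (N1 + 1)%nat N / Ssum)).
Proof.
  intros Ha HN HN1N Hpnn Hpsum Hp0 Hp Hex Hc Hc2 Hcsum Ssum Tsum D.
  destruct (decomp alpha N N1 p c HN1N Hp0 Hp (fun k Hk => proj1 (Hc k Hk))) as [HS HF].
  set (F := fun e => sum_n_m (fun k => rpow (pert N1 p c e k) alpha) 1 N).
  set (Hs := fun e => sum_n_m (fun k => hterm alpha (p k) (c k) e) (N1 + 1) N).
  set (Q := sum_n_m (fun k => c k ^ 2 * rpow (p k) (alpha - 2)) (N1 + 1) N).
  set (C := sum_n_m (fun k => rpow (c k) alpha) 1 N1).
  fold Ssum Tsum in HS, HF. fold Q C in HF.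
  assert (HF' : forall e, 0 < e -> F e - Ssum = C * rpow e alpha + alpha * Tsum * e
      + alpha * (alpha - 1) / 2 * Q * e ^ 2 + e ^ 2 * Hs e) by exact HF.
  clear HF.
  assert (HHs : L Hs 0).
  { assert (H0 := L_sum (fun k e => hterm alpha (p k) (c k) e) (fun _ => 0) (N1 + 1) N).
    rewrite sum_zero in H0 by auto. apply H0. intros k Hk. apply PC. apply Hp; lia. }
  assert (HSpos : 0 < Ssum).
  { apply sum_pos. intros; apply rpow_nonneg. exists N. split. lia. rewrite rpow_pos by (apply Hp; lia).
    apply Rpower_pos. }
  assert (Gen : forall m K b g, K <> 0 -> (forall e, 0 < e -> m e <> 0) -> L m 0 ->
     (forall e, 0 < e -> b e = m e * K / ((alpha - 1) * Ssum)) ->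
     L g K -> (forall e, 0 < e -> g e = (F e - Ssum) / m e) -> asym_equiv D b).
  { intros m K b g HK Hm0 Hm Hb Hg Heq. unfold asym_equiv.
    change (L (fun e => (/ (1 - alpha) * ln (sum_n_m (fun k => rpow (p k) alpha) 1 N)
                       - / (1 - alpha) * ln (F e)) / b e) 1).
    rewrite HS. apply (Fin' alpha Ssum K F m b Ha HSpos HK Hm0 Hm Hb g Hg Heq). }
  assert (QposOf : (exists k, (N1 < k <= N)%nat /\ c k <> 0) -> 0 < Q).
  { intros [k [Hk Hck]]. apply sum_pos. intros j Hj. apply Rmult_le_pos. apply pow2_ge_0. apply rpow_nonneg.
    exists k. split. lia. apply Rmult_lt_0_compat. apply pow2_gt_0; auto.
    rewrite rpow_pos by (apply Hp; lia). apply Rpower_pos. }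
  assert (Lsq : L (fun e => e ^ 2) 0).
  { apply (L_ext (fun e => e * e)). intros; ring. replace 0 with (0 * 0) by ring. apply L_mult; apply L_id. }
  split; [|split; [|split; [|split]]].
  -
    intros HT.
    apply (Gen (fun e => e) (alpha * Tsum) _
      (fun e => C * rpow e (alpha - 1) + alpha * Tsum + (alpha * (alpha - 1) / 2 * Q) * e + e * Hs e)).
    + apply Rmult_integral_contrapositive; split; lra.
    + intros; lra.
    + apply L_id.
    + intros e He. field. split; lra.
    + assert (HL : L (fun e => C * rpow e (alpha - 1) + alpha * Tsum + (alpha * (alpha - 1) / 2 * Q) * e + e * Hs e)
          (C * 0 + alpha * Tsum + (alpha * (alpha - 1) / 2 * Q) * 0 + 0 * 0)).
      { apply L_plus. apply L_plus. apply L_plus. apply L_mult. apply L_const. apply L_rpow0; lra.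
        apply L_const. apply L_mult. apply L_const. apply L_id. apply L_mult. apply L_id. exact HHs. }
      replace (C * 0 + alpha * Tsum + (alpha * (alpha - 1) / 2 * Q) * 0 + 0 * 0) with (alpha * Tsum) in HL by ring.
      exact HL.
    + intros e He. rewrite HF' by auto. rewrite !rpow_pos by auto. rewrite Rpower_m1 by auto.
      field. repeat split; try lra; apply Rgt_not_eq, Rpower_pos.
  -
    intros HT0 Ha2 HN1 [k0 [Hk0 Hck0]].
    assert (HC : 0 < C).
    { apply sum_pos. intros; apply rpow_nonneg. exists k0; split; auto.
      destruct (Hc k0 Hk0). rewrite rpow_pos by lra. apply Rpower_pos. }
    apply (Gen (fun e => rpow e alpha) C _ (fun e => C + (alpha * (alpha - 1) / 2 * Q + Hs e) * rpow e (2 - alpha))).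
    + lra.
    + intros e He; rewrite rpow_pos by auto; apply Rgt_not_eq, Rpower_pos.
    + apply L_rpow0; lra.
    + intros e He. field. lra.
    + assert (HL : L (fun e => C + (alpha * (alpha - 1) / 2 * Q + Hs e) * rpow e (2 - alpha))
          (C + (alpha * (alpha - 1) / 2 * Q + 0) * 0)).
      { apply L_plus. apply L_const. apply L_mult. apply L_plus. apply L_const. exact HHs. apply L_rpow0; lra. }
      rewrite Rmult_0_r, Rplus_0_r in HL. exact HL.
    + intros e He. rewrite HF' by auto. rewrite HT0. rewrite !rpow_pos by auto. rewrite Rpower_2m by auto.
      field. apply Rgt_not_eq, Rpower_pos.
  -
    intros HT0 Ha2 Hc0.
    assert (HC0 : C = 0).
    { unfold C. apply sum_zero. intros k Hk. rewrite Hc0 by auto. apply rpow_nonpos; lra. }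
    assert (HQ : 0 < Q).
    { apply QposOf. destruct Hex as [k [Hk Hck]]. exists k. split; auto.
      destruct (Compare_dec.le_lt_dec k N1). exfalso; apply Hck; apply Hc0; lia. lia. }
    assert (HK : 0 < alpha * (alpha - 1) / 2 * Q).
    { apply Rmult_lt_0_compat; auto. apply Rmult_lt_0_compat; [|lra]. apply Rmult_lt_0_compat; lra. }
    apply (Gen (fun e => e ^ 2) (alpha * (alpha - 1) / 2 * Q) _ (fun e => alpha * (alpha - 1) / 2 * Q + Hs e)).
    + lra.
    + intros e He; apply pow_nonzero; lra.
    + exact Lsq.
    + intros e He. field. lra.
    + assert (HL := L_plus _ _ _ _ (L_const (alpha * (alpha - 1) / 2 * Q)) HHs).
      rewrite Rplus_0_r in HL. exact HL.
    + intros e He. rewrite HF' by auto. rewrite HT0, HC0. field. lra.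
  -
    intros HT0 Ha2. subst alpha.
    assert (EC : C = sum_n_m (fun k => c k ^ 2) 1 N1).
    { unfold C. apply sum_ext. intros k Hk. destruct (Hc k Hk) as [H1 _].
      destruct (Req_dec (c k) 0) as [E|E]. rewrite E, rpow_nonpos by lra. ring.
      rewrite rpow_pos by lra. apply Rpower_two; lra. }
    assert (EQ : Q = sum_n_m (fun k => c k ^ 2) (N1 + 1) N).
    { unfold Q. apply sum_ext. intros k Hk. rewrite rpow_pos by (apply Hp; lia).
      replace (2 - 2) with 0 by ring. rewrite Rpower_O by (apply Hp; lia). ring. }
    assert (ES : Ssum = sum_n_m (fun k => p k ^ 2) (N1 + 1) N).
    { unfold Ssum. apply sum_ext. intros k Hk. rewrite rpow_pos by (apply Hp; lia). apply Rpower_two. apply Hp; lia. }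
    assert (Htot : sum_n_m (fun k => c k ^ 2) 1 N = C + Q).
    { rewrite (sum_split _ N1 N) by lia. rewrite EC, EQ. reflexivity. }
    assert (HK : 0 < C + Q).
    { rewrite <- Htot. apply sum_pos. intros; apply pow2_ge_0. destruct Hex as [k [Hk Hck]].
      exists k; split; auto. apply pow2_gt_0; auto. }
    apply (Gen (fun e => e ^ 2) (C + Q) _ (fun e => C + Q + Hs e)).
    + lra.
    + intros e He; apply pow_nonzero; lra.
    + exact Lsq.
    + intros e He. rewrite Htot, <- ES. field. lra.
    + assert (HL := L_plus _ _ _ _ (L_const (C + Q)) HHs).
      rewrite Rplus_0_r in HL. exact HL.
    + intros e He. rewrite HF' by auto. rewrite HT0. rewrite rpow_pos by auto. rewrite Rpower_two by auto.
      field. lra.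
  -
    intros HT0 Ha2.
    assert (HQ : 0 < Q).
    { destruct (classic (exists k, (N1 < k <= N)%nat /\ c k <> 0)) as [Hk|Hk]; [apply QposOf; auto|exfalso].
      assert (Hz : sum_n_m c (N1 + 1) N = 0).
      { apply sum_zero. intros k Hk'. apply NNPP. intro Hck. apply Hk. exists k. split; [lia|auto]. }
      destruct Hex as [k [Hk1 Hck]].
      destruct (Compare_dec.le_lt_dec k N1) as [Hkn|Hkn].
      - assert (Hpos : 0 < sum_n_m c 1 N1).
        { apply sum_pos. intros j Hj; apply Hc; auto. exists k. split. lia. destruct (Hc k); [lia|]. lra. }
        rewrite (sum_split _ N1 N) in Hcsum by lia. rewrite Hz in Hcsum. lra.
      - apply Hk. exists k. split; [lia|auto]. }
    assert (HK : 0 < alpha * (alpha - 1) / 2 * Q).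
    { apply Rmult_lt_0_compat; auto. apply Rmult_lt_0_compat; [|lra]. apply Rmult_lt_0_compat; lra. }
    apply (Gen (fun e => e ^ 2) (alpha * (alpha - 1) / 2 * Q) _
       (fun e => C * rpow e (alpha - 2) + alpha * (alpha - 1) / 2 * Q + Hs e)).
    + lra.
    + intros e He; apply pow_nonzero; lra.
    + exact Lsq.
    + intros e He. field. lra.
    + assert (HL : L (fun e => C * rpow e (alpha - 2) + alpha * (alpha - 1) / 2 * Q + Hs e)
          (C * 0 + alpha * (alpha - 1) / 2 * Q + 0)).
      { apply L_plus. apply L_plus. apply L_mult. apply L_const. apply L_rpow0; lra. apply L_const. exact HHs. }
      replace (C * 0 + alpha * (alpha - 1) / 2 * Q + 0) with (alpha * (alpha - 1) / 2 * Q) in HL by ring. exact HL.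
    + intros e He. rewrite HF' by auto. rewrite HT0. rewrite !rpow_pos by auto. rewrite Rpower_m2 by auto.
      field. repeat split; try lra; apply Rgt_not_eq, Rpower_pos.
Qed.
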